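(* $\mathsf{Gap_{tot}P}=\mathsf{GapP}$.
   Context: An NPTM is a non-deterministic polynomial-time Turing machine. For an NPTM $M$ and input $x$, $acc_M(x)$ and $rej_M(x)$ denote the numbers of accepting and rejecting computation paths of $M$ on $x$, and $tot_M(x)$ denotes the number of all computation paths of $M$ on $x$ minus $1$. $\mathsf{TotP}=\{tot_M\mid M \text{ an NPTM}\}$, $\mathsf{GapP}=\{acc_M-rej_M\mid M\text{ an NPTM}\}$ (functions $\Sigma^*\to\mathbb{Z}$). $\mathsf{Gap_{tot}P}$ is the class of functions $f$ that are the difference $f=g-h$ of two functions $g,h\in\mathsf{TotP}$. *)

(* Defs.v *)
(* A concrete model of non-deterministic polynomial-time
   Turing machines (single two-way-infinite tape, input alphabet {0,1}). *)
From HB Require Import structures.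
From mathcomp Require Import all_boot all_algebra.
Set Implicit Arguments. Unset Strict Implicit. Unset Printing Implicit Defensive.
Import GRing.Theory Num.Theory.

Inductive dir := DL | DS | DR.

Definition dir_eqb (d e : dir) : bool :=
  match d, e with DL, DL | DS, DS | DR, DR => true | _, _ => false end.
Lemma dir_eqP : Equality.axiom dir_eqb.
Proof. by case; case; constructor. Qed.
HB.instance Definition _ := hasDecEq.Build dir dir_eqP.

(* The transition relation is given as a
   duplicate-free list of possible moves; a configuration with no possible
   move is halting, and it is accepting iff its state satisfies [qacc]. *)
Unset Implicit Arguments.
Record NTM := {
  Q : finType;
  Gam : finType;
  blank : Gam;
  sym_of : bool -> Gam;
  sym_of_inj : injective sym_of;
  blank_fresh : forall b, sym_of b != blank;
  q0 : Q;
  qacc : pred Q;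
  delta : Q -> Gam -> seq (Q * Gam * dir);
  delta_uniq : forall q a, uniq (delta q a) }.
Set Implicit Arguments.

(* configuration: state, tape left of head (nearest first), scanned symbol,
   tape right of head (nearest first); unlisted cells are blank *)
Definition config (M : NTM) := (Q M * seq (Gam M) * Gam M * seq (Gam M))%type.

Definition move (M : NTM) (q : Q M) (d : dir) (l : seq (Gam M)) (b : Gam M)
    (r : seq (Gam M)) : config M :=
  match d with
  | DS => (q, l, b, r)
  | DL => match l with
          | [::] => (q, [::], blank M, b :: r)
          | c :: l' => (q, l', c, b :: r)
          end
  | DR => match r with
          | [::] => (q, b :: l, blank M, [::])
          | c :: r' => (q, b :: l, c, r')
          end
  end.

Definition step (M : NTM) (c : config M) : seq (config M) :=
  let: (q, l, a, r) := c in
  map (fun t : Q M * Gam M * dir => let: (q', b, d) := t in @move M q' d l b r)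
      (delta M q a).

Definition state (M : NTM) (c : config M) : Q M := c.1.1.1.

Definition add_opt (u v : option (nat * nat)) : option (nat * nat) :=
  match u, v with
  | Some (a1, r1), Some (a2, r2) => Some (a1 + a2, r1 + r2)
  | _, _ => None
  end.

(* [run fuel c] = Some (number of accepting paths, number of rejecting paths)
   of the computation tree from c, provided every path halts within [fuel]
   steps; None otherwise. *)
Fixpoint run (M : NTM) (fuel : nat) (c : config M) : option (nat * nat) :=
  match step c with
  | [::] => Some (if qacc M (state c) then (1, 0) else (0, 1))
  | cs => match fuel with
          | 0 => None
          | f.+1 => foldr (fun c' acc => add_opt (@run M f c') acc) (Some (0, 0)) cs
          end
  end.

Definition init (M : NTM) (x : seq bool) : config M :=
  match x with
  | [::] => (q0 M, [::], blank M, [::])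
  | b :: x' => (q0 M, [::], sym_of M b, map (sym_of M) x')
  end.

(* NPTM: every computation path on input x halts within |x|^k + k steps
   (every polynomial bound is dominated by one of this form). *)
Unset Implicit Arguments.
Record NPTM := {
  mach : NTM;
  pexp : nat;
  ptime : forall x : seq bool, @run mach (size x ^ pexp + pexp) (init mach x) <> None }.
Set Implicit Arguments.

Definition paths (M : NPTM) (x : seq bool) : nat * nat :=
  match @run (mach M) (size x ^ pexp M + pexp M) (init (mach M) x) with
  | Some p => p
  | None => (0, 0)
  end.

Definition acc (M : NPTM) (x : seq bool) : nat := (paths M x).1.
Definition rej (M : NPTM) (x : seq bool) : nat := (paths M x).2.
Definition tot (M : NPTM) (x : seq bool) : nat := (acc M x + rej M x).-1.

Definition TotP (f : seq bool -> nat) : Prop :=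
  exists M : NPTM, forall x, f x = tot M x.

Definition GapP (f : seq bool -> int) : Prop :=
  exists M : NPTM, forall x, f x = ((acc M x)%:Z - (rej M x)%:Z)%R.

Definition Gap_totP (f : seq bool -> int) : Prop :=
  exists g h : seq bool -> nat,
    [/\ TotP g, TotP h & forall x, f x = ((g x)%:Z - (h x)%:Z)%R].

(* Main.v *)
Require Import Defs.
From mathcomp Require Import all_boot all_algebra.
From mathcomp Require Import zify.
Set Implicit Arguments. Unset Strict Implicit. Unset Printing Implicit Defensive.

Lemma run_eq (M : NTM) f (c : config M) :
  run f c = match step c with
  | [::] => Some (if qacc M (state c) then (1, 0) else (0, 1))
  | cs => match f with 0 => None | f'.+1 => foldr (fun c' acc => add_opt (run f' c') acc) (Some (0,0)) cs end end.
Proof. by case: f. Qed.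

Lemma foldr_ext (T : Type) (F G : T -> option (nat*nat)) z s :
  (forall c, F c <> None -> G c = F c) ->
  foldr (fun c acc => add_opt (F c) acc) z s <> None ->
  foldr (fun c acc => add_opt (G c) acc) z s = foldr (fun c acc => add_opt (F c) acc) z s.
Proof.
move=> H; elim: s => //= x s IH.
case E: (F x) => [[a r]|] //; case E2: (foldr (fun c acc => add_opt (F c) acc) z s) => [[a2 r2]|] // _.
by rewrite H ?E // IH ?E2.
Qed.

Lemma run_mono (M : NTM) f (c : config M) p : run f c = Some p -> forall f', f <= f' -> run f' c = Some p.
Proof.
elim: f c p => [|f IH] c p Hr f' Hf; rewrite run_eq in Hr; rewrite run_eq;
case E: (step c) Hr => [|c1 cs] //.
case: f' Hf => // f' Hf Hr. rewrite (@foldr_ext _ (run f)) ?Hr // => c' Hc'.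
case E': (run f c') Hc' => [p'|] // _. exact: IH E' _ Hf.
Qed.

Lemma run_pos (M : NTM) f (c : config M) a r : run f c = Some (a, r) -> 0 < a + r.
Proof.
elim: f c a r => [|f IH] c a r; rewrite run_eq; case: (step c) => [|c1 cs] //=;
  try by case: ifP => _ [<- <-].
case E1: (run f c1) => [[a1 r1]|] //.
case: (foldr _ _ cs) => [[a2 r2]|] // [<- <-].
have := IH _ _ _ E1. lia.
Qed.

Lemma foldr_map_opt (T U : Type) (F : U -> option (nat * nat)) (g : T -> U) z s :
  foldr (fun c acc => add_opt (F c) acc) z (map g s) = foldr (fun c acc => add_opt (F (g c)) acc) z s.
Proof. by elim: s => //= x s ->. Qed.

Lemma sim (N M : NTM) (pi : config N -> config M) (P : pred (config N)) (h : nat*nat -> nat*nat)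
 (hadd : forall u v, add_opt (omap h u) (omap h v) = omap h (add_opt u v))
 (h0 : h (0,0) = (0,0))
 (Hstep : forall c, P c -> map pi (step c) = step (pi c) /\ all P (step c))
 (Hleaf : forall c, P c -> (if qacc N (state c) then (1,0) else (0,1)) = h (if qacc M (state (pi c)) then (1,0) else (0,1))) :
 forall f c, P c -> run f c = omap h (run f (pi c)).
Proof.
elim=> [|f IH] c Pc; rewrite !run_eq; have [Hm Hall] := Hstep c Pc; rewrite -Hm.
  by case E: (step c) Hall => [|c1 cs] Hall //=; rewrite ?Hleaf.
have L : forall s, all P s -> foldr (fun c' acc => add_opt (run f c') acc) (Some (0,0)) s
   = omap h (foldr (fun c' acc => add_opt (run f c') acc) (Some (0,0)) (map pi s)).
  elim=> [|x s IHs] /=; first by rewrite h0.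
  by case/andP=> Px Ps; rewrite IH // IHs // hadd.
case E: (step c) Hall => [|c1 cs] Hall; first by rewrite /= Hleaf.
by have := L (c1 :: cs) Hall; rewrite /= => ->.
Qed.

Definition symB (M1 M2 : NTM) (b : bool) : (Gam M1 * Gam M2)%type := (sym_of M1 b, sym_of M2 b).
Lemma symB_inj (M1 M2 : NTM) : injective (@symB M1 M2).
Proof. by move=> b1 b2 [/(@sym_of_inj M1)]. Qed.
Lemma symB_fresh (M1 M2 : NTM) b : @symB M1 M2 b != (blank M1, blank M2).
Proof. by rewrite /symB xpair_eqE (negbTE (blank_fresh M1 b)). Qed.

Definition deltaB (M1 M2 : NTM) (q : option (Q M1 + Q M2)) (a : (Gam M1 * Gam M2)%type)
  : seq (option (Q M1 + Q M2) * (Gam M1 * Gam M2) * dir) :=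
  match q with
  | None => [:: (Some (inl (q0 M1)), a, DS); (Some (inr (q0 M2)), a, DS)]
  | Some (inl q1) => map (fun t => (Some (inl t.1.1), (t.1.2, a.2), t.2)) (delta M1 q1 a.1)
  | Some (inr q2) => map (fun t => (Some (inr t.1.1), (a.1, t.1.2), t.2)) (delta M2 q2 a.2)
  end.

Lemma deltaB_uniq (M1 M2 : NTM) q a : uniq (@deltaB M1 M2 q a).
Proof.
case: q => [[q1|q2]|] /=; last by [].
- rewrite map_inj_uniq ?delta_uniq // => [[[x y] z]] [[x' y'] z'] /= [-> -> ->] //.
- rewrite map_inj_uniq ?delta_uniq // => [[[x y] z]] [[x' y'] z'] /= [-> -> ->] //.
Qed.

Definition qaccB (M1 M2 : NTM) (q : option (Q M1 + Q M2)) : bool :=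
  if q is Some (inl _) then true else false.

Definition NB (M1 M2 : NTM) : NTM :=
  @Build_NTM _ _ (blank M1, blank M2) (@symB M1 M2) (@symB_inj M1 M2) (@symB_fresh M1 M2)
    (None : option (Q M1 + Q M2)) (@qaccB M1 M2) (@deltaB M1 M2) (@deltaB_uniq M1 M2).

Definition pi1 (M1 M2 : NTM) (c : config (NB M1 M2)) : config M1 :=
  let: (q, l, a, r) := c in
  (if q is Some (inl q1) then q1 else q0 M1, map fst l, a.1, map fst r).
Definition pi2 (M1 M2 : NTM) (c : config (NB M1 M2)) : config M2 :=
  let: (q, l, a, r) := c in
  (if q is Some (inr q2) then q2 else q0 M2, map snd l, a.2, map snd r).

Definition P1 (M1 M2 : NTM) : pred (config (NB M1 M2)) :=
  fun c => if c.1.1.1 is Some (inl _) then true else false.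
Definition P2 (M1 M2 : NTM) : pred (config (NB M1 M2)) :=
  fun c => if c.1.1.1 is Some (inr _) then true else false.

Lemma sim1 (M1 M2 : NTM) f (c : config (NB M1 M2)) : P1 c ->
  run f c = omap (fun p => (p.1 + p.2, 0)) (run f (pi1 c)).
Proof.
apply: sim.
- by case=> [[a1 r1]|] [[a2 r2]|] //=; rewrite addnACA.
- by [].
- case=> [[[[[q|q]|] l] a] r] //= _; split.
  + rewrite -!map_comp; apply: eq_map => [[[q' b] d]] /=.
    by case: d; [case: l => [|x l] | | case: r => [|x r]].
  + rewrite -map_comp all_map; apply/allP => [[[q' b] d]] _ /=.
    by case: d; [case: l => [|x l] | | case: r => [|x r]].
- case=> [[[[[q|q]|] l] a] r] //= _.
  by case: ifP.
Qed.

Lemma sim2 (M1 M2 : NTM) f (c : config (NB M1 M2)) : P2 c ->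
  run f c = omap (fun p => (0, p.1 + p.2)) (run f (pi2 c)).
Proof.
apply: sim.
- by case=> [[a1 r1]|] [[a2 r2]|] //=; rewrite addnACA.
- by [].
- case=> [[[[[q|q]|] l] a] r] //= _; split.
  + rewrite -!map_comp; apply: eq_map => [[[q' b] d]] /=.
    by case: d; [case: l => [|x l] | | case: r => [|x r]].
  + rewrite -map_comp all_map; apply/allP => [[[q' b] d]] _ /=.
    by case: d; [case: l => [|x l] | | case: r => [|x r]].
- case=> [[[[[q|q]|] l] a] r] //= _.
  by case: ifP.
Qed.

Definition deltaA (M : NTM) (bb : bool) (q : (Q M + bool)%type) (a : Gam M)
  : seq ((Q M + bool) * Gam M * dir) :=
  match q with
  | inl q => match delta M q a with
             | [::] => (inr true, a, DS) :: (if qacc M q == bb then [:: (inr false, a, DS)] else [::])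
             | s => map (fun t => (inl t.1.1, t.1.2, t.2)) s
             end
  | inr _ => [::]
  end.

Lemma deltaA_uniq (M : NTM) bb q a : uniq (@deltaA M bb q a).
Proof.
case: q => [q|b] //; rewrite /deltaA.
case: (delta M q a) (delta_uniq M q a) => [|t ts] U.
  by rewrite /=; case: ifP.
move: U; rewrite -(map_inj_uniq (f := fun t : Q M * Gam M * dir => (inl t.1.1 : (Q M + bool)%type, t.1.2, t.2))).
  by [].
by move=> [[x y] z] [[x' y'] z'] /= [-> -> ->].
Qed.

Definition NA (M : NTM) (bb : bool) : NTM :=
  @Build_NTM _ _ (blank M) (sym_of M) (@sym_of_inj M) (@blank_fresh M)
    (inl (q0 M) : (Q M + bool)%type) (fun _ => true) (@deltaA M bb) (@deltaA_uniq M bb).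

Definition liftc (M : NTM) bb (c : config M) : config (NA M bb) :=
  let: (q, l, a, r) := c in (inl q, l, a, r).

Definition hA (bb : bool) (p : nat * nat) : nat * nat :=
  (p.1 + p.2 + (if bb then p.1 else p.2), 0).

Lemma run0A (M : NTM) bb (c : config M) : run 0 (liftc bb c) = None.
Proof.
case: c => [[[q l] a] r]; rewrite run_eq /step /= /deltaA.
by case: (delta M q a).
Qed.

Lemma stepA (M : NTM) bb (c : config M) : step (liftc bb c) =
  if step c is [::] then [seq (inr b, c.1.1.2, c.1.2, c.2) | b <- true :: (if qacc M (state c) == bb then [:: false] else [::])]
  else map (liftc bb) (step c).
Proof.
case: c => [[[q l] a] r]; rewrite /step /= /deltaA.
case: (delta M q a) => [|t ts] /=; first by case: ifP.
rewrite -!map_comp; congr (_ :: _).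
2: apply: eq_map.
1: move: t.
all: move=> [[q' b] d] /=.
all: by case: d; [case: l => [|x l] | | case: r => [|x r]].
Qed.

Lemma run_inr (M : NTM) bb f b l a r : run f ((inr b, l, a, r) : config (NA M bb)) = Some (1, 0).
Proof. by case: f. Qed.

Lemma run_cons (M : NTM) f (c : config M) s : step c = s -> s <> [::] ->
  run f.+1 c = foldr (fun c' acc => add_opt (run f c') acc) (Some (0,0)) s.
Proof. by move=> E; rewrite run_eq E; case: s {E}. Qed.

Lemma run_nil (M : NTM) f (c : config M) : step c = [::] ->
  run f c = Some (if qacc M (state c) then (1, 0) else (0, 1)).
Proof. by move=> E; rewrite run_eq E. Qed.

Lemma foldr_cons (T R : Type) (F : T -> R -> R) z x s : foldr F z (x :: s) = F x (foldr F z s).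
Proof. by []. Qed.

Lemma simA (M : NTM) bb f (c : config M) :
  run f.+1 (liftc bb c) = omap (hA bb) (run f c).
Proof.
elim: f c => [|f IH] c; case E: (step c) => [|c1 cs].
- rewrite (run_nil _ E) (run_cons _ (stepA bb c)); rewrite E //.
  by case: c E => [[[q l] a] r] E /=; case: (qacc M q); case: bb.
- rewrite (run_cons _ (stepA bb c)); rewrite E //.
  by rewrite foldr_cons run0A (run_eq _ c) E.
- rewrite (run_nil _ E) (run_cons _ (stepA bb c)); rewrite E //.
  clear IH; by case: c E => [[[q l] a] r] E /=; case: (qacc M q); case: bb.
- rewrite (run_cons _ (stepA bb c)); rewrite E //.
  rewrite foldr_map_opt (run_cons _ E) //.
  elim: (c1 :: cs) => [|x s IHs]; first by rewrite /hA; case: (bb).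
  rewrite !foldr_cons IH IHs; case: (run f x) => [[a1 r1]|] //; case: (foldr _ _ s) => [[a2 r2]|] //=.
  rewrite /hA /=; case: (bb); congr (Some (_, _)); lia.
Qed.

Lemma pathsE (M : NPTM) x f : size x ^ pexp M + pexp M <= f ->
  run f (init (mach M) x) = Some (paths M x).
Proof.
rewrite /paths; have := ptime M x.
case E: (run _ _) => [p|] // _ Hf; exact: run_mono E _ Hf.
Qed.

Lemma paths_pos (M : NPTM) x : 0 < (paths M x).1 + (paths M x).2.
Proof.
have := @pathsE M x _ (leqnn _); case: (paths M x) => a r; by move/run_pos.
Qed.

Lemma bound_lt n k1 k : k1 + 2 <= k -> n ^ k1 + k1 < n ^ k + k.
Proof.
move=> Hk; case: n => [|n].
  have -> : 0 ^ k = 0 by rewrite exp0n //; lia.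
  have : 0 ^ k1 <= 1 by case: (k1) => [|j] //; rewrite exp0n.
  lia.
have : n.+1 ^ k1 <= n.+1 ^ k by rewrite leq_pexp2l //; lia.
lia.
Qed.

Lemma NA_run (M : NPTM) bb x :
  run (size x ^ (pexp M + 2) + (pexp M + 2)) (init (NA (mach M) bb) x) = Some (hA bb (paths M x)).
Proof.
have H := @bound_lt (size x) (pexp M) (pexp M + 2) (leqnn _).
have -> : init (NA (mach M) bb) x = liftc bb (init (mach M) x) by case: (x).
move: H; case: (size x ^ (pexp M + 2) + (pexp M + 2)) => [|B] // HB.
by rewrite simA (pathsE (x:=x) (f:=B)).
Qed.

Definition NAP (M : NPTM) bb : NPTM :=
  @Build_NPTM (NA (mach M) bb) (pexp M + 2) (fun x => ltac:(by rewrite NA_run)).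

Lemma NAP_paths (M : NPTM) bb x : paths (NAP M bb) x = hA bb (paths M x).
Proof. by rewrite /paths /= NA_run. Qed.

Lemma NB_run (M1 M2 : NPTM) x :
  let k := pexp M1 + pexp M2 + 2 in
  run (size x ^ k + k) (init (NB (mach M1) (mach M2)) x) =
  Some ((paths M1 x).1 + (paths M1 x).2, (paths M2 x).1 + (paths M2 x).2).
Proof.
move=> k.
have H1 := @bound_lt (size x) (pexp M1) k ltac:(lia).
have H2 := @bound_lt (size x) (pexp M2) k ltac:(lia).
set N := NB (mach M1) (mach M2).
have E : step (init N x) = [:: (Some (inl (q0 (mach M1))), [::], (init N x).1.2, (init N x).2);
                              (Some (inr (q0 (mach M2))), [::], (init N x).1.2, (init N x).2)].
  by case: x {H1 H2}.
have I1 : pi1 (Some (inl (q0 (mach M1))), [::], (init N x).1.2, (init N x).2) = init (mach M1) x.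
  by case: x {H1 H2 E} => [|b x] //=; rewrite -map_comp.
have I2 : pi2 (Some (inr (q0 (mach M2))), [::], (init N x).1.2, (init N x).2) = init (mach M2) x.
  by case: x {H1 H2 E I1} => [|b x] //=; rewrite -map_comp.
move: H1 H2; case: (size x ^ k + k) => [|B] // HB1 HB2.
rewrite (run_cons _ E) // !foldr_cons sim1 // sim2 // I1 I2.
by rewrite (pathsE (f:=B)) // (pathsE (f:=B)) //= !addn0 add0n.
Qed.

Theorem proposition4 : forall f : seq bool -> int, Gap_totP f <-> GapP f.
Proof.
move=> f; split.
- case=> g [h [[M1 HM1] [M2 HM2] Hf]].
  pose N := Build_NPTM (NB (mach M1) (mach M2)) (pexp M1 + pexp M2 + 2) (fun x => ltac:(by rewrite NB_run)).
  exists N => x.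
  have PN : paths N x = ((paths M1 x).1 + (paths M1 x).2, (paths M2 x).1 + (paths M2 x).2).
    by rewrite /paths /= NB_run.
  rewrite Hf HM1 HM2 /acc /rej PN /tot /acc /rej /=.
  move: (paths_pos M1 x) (paths_pos M2 x).
  case: (paths M1 x) => a1 r1; case: (paths M2 x) => a2 r2 /=; lia.
- case=> M HM.
  exists (tot (NAP M true)), (tot (NAP M false)); split;
    [by exists (NAP M true) | by exists (NAP M false) |].
  move=> x; rewrite HM /tot /acc /rej !NAP_paths /hA.
  move: (paths_pos M x); case: (paths M x) => a r /=; lia.
Qed.
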